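(* Let $(a_i,b_i)\subseteq[0,1]$ be a countable family of pairwise disjoint, non-empty open intervals and let $f_i$ be $T$-norms. Let $g$ be their ordinal sum. If every $f_i$ satisfies property $A$, then $g$ satisfies property $A$. If every $f_i$ satisfies property $B$, then $g$ satisfies property $B$.
   Context: A $T$-norm is a function $\otimes:[0,1]^2\to[0,1]$ that is commutative, associative, monotonic (i.e. $x\le y$ implies $x\otimes z\le y\otimes z$) and has $1$ as neutral element ($x\otimes 1=x$). The ordinal sum $g$ of the family $(f_i,a_i,b_i)$ is defined by $$g(x,y)=\begin{cases} a_i+(b_i-a_i)\,f_i\!\left(\frac{x-a_i}{b_i-a_i},\frac{y-a_i}{b_i-a_i}\right) & \text{if } (x,y)\in[a_i,b_i]^2,\\ \min(x,y) & \text{otherwise,}\end{cases}$$ and is itself a $T$-norm. A function $f:[0,1]^2\to[0,1]$ satisfies property $A$ if for all $0\le x\le y\le z\le w\le 1$, $w+x\le y+z$ implies $f(x,w)\le f(y,z)$. It satisfies property $B$ (is $2$-increasing) if for all $0\le x\le y\le 1$ and $0\le z\le w\le 1$, $f(x,w)-f(x,z)\le f(y,w)-f(y,z)$. *)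

(* Defs.v *)
(* concrete reals R. Functions [0,1]^2 -> [0,1] are modelled as
   R -> R -> R, with all properties quantified over [0,1] only. *)
From Stdlib Require Import Reals.
Open Scope R_scope.

Definition in01 (x : R) : Prop := 0 <= x <= 1.

Definition is_tnorm (f : R -> R -> R) : Prop :=
  (forall x y, in01 x -> in01 y -> in01 (f x y)) /\
  (forall x y, in01 x -> in01 y -> f x y = f y x) /\
  (forall x y z, in01 x -> in01 y -> in01 z -> f x (f y z) = f (f x y) z) /\
  (forall x y z, in01 x -> in01 y -> in01 z -> x <= y -> f x z <= f y z) /\
  (forall x, in01 x -> f x 1 = x).

Definition propA (f : R -> R -> R) : Prop :=
  forall x y z w, 0 <= x -> x <= y -> y <= z -> z <= w -> w <= 1 ->
    w + x <= y + z -> f x w <= f y z.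

Definition propB (f : R -> R -> R) : Prop :=
  forall x y z w, 0 <= x -> x <= y -> y <= 1 -> 0 <= z -> z <= w -> w <= 1 ->
    f x w - f x z <= f y w - f y z.

Definition interval_family (I : Type) (a b : I -> R) : Prop :=
  (exists enc : I -> nat, forall i j, enc i = enc j -> i = j) /\
  (forall i, 0 <= a i /\ a i < b i /\ b i <= 1) /\
  (forall i j, i <> j -> forall t, ~ (a i < t < b i /\ a j < t < b j)).

Definition is_ordinal_sum (I : Type) (f : I -> R -> R -> R) (a b : I -> R)
  (g : R -> R -> R) : Prop :=
  forall x y,
    (forall i, a i <= x <= b i -> a i <= y <= b i ->
        g x y = a i + (b i - a i) *
          f i ((x - a i) / (b i - a i)) ((y - a i) / (b i - a i))) /\
    ((forall i, ~ (a i <= x <= b i /\ a i <= y <= b i)) -> g x y = Rmin x y).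

(* Main.v *)
Require Import Defs.
From Stdlib Require Import Reals Lra Classical.
Open Scope R_scope.

Lemma tn_props f : is_tnorm f ->
  (forall x y, in01 x -> in01 y -> 0 <= f x y) /\
  (forall x, in01 x -> f x 0 = 0 /\ f 0 x = 0) /\
  (forall x, in01 x -> f 1 x = x) /\
  (forall x, in01 x -> f x 1 = x) /\
  (forall x y, in01 x -> in01 y -> f x y <= x /\ f x y <= y) /\
  (forall x y z, in01 x -> in01 y -> in01 z -> x <= y -> f x z <= f y z) /\
  (forall x y z, in01 x -> in01 y -> in01 z -> y <= z -> f x y <= f x z).
Proof.
  intros [Hr [Hc [_ [Hm Hn]]]].
  assert (I0 : in01 0) by (unfold in01; lra).
  assert (I1 : in01 1) by (unfold in01; lra).
  assert (Hpos : forall x y, in01 x -> in01 y -> 0 <= f x y).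
  { intros x y hx hy; destruct (Hr x y hx hy); lra. }
  assert (H1l : forall x, in01 x -> f 1 x = x).
  { intros x hx; rewrite Hc by auto; apply Hn; auto. }
  assert (Hm2 : forall x y z, in01 x -> in01 y -> in01 z -> y <= z -> f x y <= f x z).
  { intros x y z hx hy hz hyz. rewrite (Hc x y), (Hc x z) by auto. apply Hm; auto. }
  split; [exact Hpos|]. split.
  { intros x hx. assert (H : f x 0 <= f 1 0) by (apply Hm; auto; unfold in01 in hx; lra).
    rewrite H1l in H by auto. pose proof (Hpos x 0 hx I0). rewrite (Hc 0 x) by auto. split; lra. }
  split; [exact H1l|]. split; [exact Hn|]. split.
  { intros x y hx hy. split.
    - pose proof (Hm2 x y 1 hx hy I1 ltac:(unfold in01 in hy; lra)) as H. rewrite Hn in H by auto. exact H.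
    - pose proof (Hm x 1 y hx I1 hy ltac:(unfold in01 in hx; lra)) as H. rewrite H1l in H by auto. exact H. }
  split; [exact Hm| exact Hm2].
Qed.

Definition sc (a b s : R) := (s - a) / (b - a).

Lemma sc_in01 a b s : a < b -> a <= s <= b -> in01 (sc a b s).
Proof.
  intros Hab Hs. unfold in01, sc, Rdiv. assert (0 < / (b - a)) by (apply Rinv_0_lt_compat; lra).
  split.
  - apply Rmult_le_pos; lra.
  - replace 1 with ((b - a) * / (b - a)) by (field; lra).
    apply Rmult_le_compat_r; lra.
Qed.

Lemma sc_mono a b u v : a < b -> u <= v -> sc a b u <= sc a b v.
Proof. intros. unfold sc, Rdiv. assert (0 < / (b - a)) by (apply Rinv_0_lt_compat; lra).
  apply Rmult_le_compat_r; lra. Qed.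

Lemma sc_mul a b s : a < b -> (b - a) * sc a b s = s - a.
Proof. intros; unfold sc; field; lra. Qed.

Definition ctx (I : Type) a b f g :=
  interval_family I a b /\ (forall i : I, is_tnorm (f i)) /\ is_ordinal_sum I f a b g.

Lemma c_ab I a b f g : ctx I a b f g -> forall i, 0 <= a i /\ a i < b i /\ b i <= 1.
Proof. intros [[_ [H _]] _]; exact H. Qed.

Lemma c_overlap I a b f g : ctx I a b f g ->
  forall i j, i <> j -> a i < b j -> a j < b i -> False.
Proof.
  intros C i j hij h1 h2. destruct C as [[_ [Hab Hd]] _].
  destruct (Hab i) as [? [? ?]], (Hab j) as [? [? ?]].
  destruct (Rle_dec (a i) (a j)); destruct (Rle_dec (b i) (b j)).
  - apply (Hd i j hij ((a j + b i)/2)); repeat split; lra.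
  - apply (Hd i j hij ((a j + b j)/2)); repeat split; lra.
  - apply (Hd i j hij ((a i + b i)/2)); repeat split; lra.
  - apply (Hd i j hij ((a i + b j)/2)); repeat split; lra.
Qed.

Lemma c_in I a b f g : ctx I a b f g -> forall i s t, a i <= s <= b i -> a i <= t <= b i ->
  g s t = a i + (b i - a i) * f i (sc (a i) (b i) s) (sc (a i) (b i) t).
Proof. intros [_ [_ HO]] i s t hs ht. exact (proj1 (HO s t) i hs ht). Qed.

Lemma c_out I a b f g : ctx I a b f g -> forall s t,
  (forall i, ~ (a i <= s <= b i /\ a i <= t <= b i)) -> g s t = Rmin s t.
Proof. intros [_ [_ HO]] s t h. exact (proj2 (HO s t) h). Qed.

Lemma c_min I a b f g : ctx I a b f g -> forall s t, 0 <= s <= 1 -> 0 <= t <= 1 ->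
  (forall j, ~ (a j < s < b j /\ a j < t < b j)) -> g s t = Rmin s t.
Proof.
  intros C s t hs ht Hn.
  destruct (classic (exists i, a i <= s <= b i /\ a i <= t <= b i)) as [[i [h1 h2]] | Hno].
  - rewrite (c_in _ _ _ _ _ C i s t h1 h2).
    destruct (c_ab _ _ _ _ _ C i) as [ha [hab hb]].
    destruct (tn_props _ (proj1 (proj2 C) i)) as [_ [H0 [H1 [H1r _]]]].
    assert (Hs := sc_in01 _ _ s hab h1). assert (Ht := sc_in01 _ _ t hab h2).
    assert (Hn' : ~ (a i < s < b i /\ a i < t < b i)) by apply Hn.
    destruct (Rle_lt_or_eq_dec _ _ (proj1 h1)) as [l1|e1];
    [destruct (Rle_lt_or_eq_dec _ _ (proj2 h1)) as [l2|e2];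
     [destruct (Rle_lt_or_eq_dec _ _ (proj1 h2)) as [l3|e3];
      [destruct (Rle_lt_or_eq_dec _ _ (proj2 h2)) as [l4|e4] |] |] |].
    + exfalso; apply Hn'; repeat split; lra.
    + replace (sc (a i) (b i) t) with 1 by (rewrite e4; unfold sc; field; lra).
      rewrite H1r by auto. rewrite sc_mul by lra.
      unfold Rmin; destruct (Rle_dec s t); lra.
    + replace (sc (a i) (b i) t) with 0 by (rewrite <- e3; unfold sc; field; lra).
      rewrite (proj1 (H0 _ Hs)). unfold Rmin; destruct (Rle_dec s t); lra.
    + replace (sc (a i) (b i) s) with 1 by (rewrite e2; unfold sc; field; lra).
      rewrite H1 by auto. rewrite sc_mul by lra.
      unfold Rmin; destruct (Rle_dec s t); lra.
    + replace (sc (a i) (b i) s) with 0 by (rewrite <- e1; unfold sc; field; lra).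
      rewrite (proj2 (H0 _ Ht)). unfold Rmin; destruct (Rle_dec s t); lra.
  - apply (c_out _ _ _ _ _ C). intros i hi; apply Hno; exists i; exact hi.
Qed.

Lemma c_le_min I a b f g : ctx I a b f g -> forall s t, 0 <= s <= 1 -> 0 <= t <= 1 ->
  g s t <= s /\ g s t <= t.
Proof.
  intros C s t hs ht.
  destruct (classic (exists i, a i <= s <= b i /\ a i <= t <= b i)) as [[i [h1 h2]] | Hno].
  - rewrite (c_in _ _ _ _ _ C i s t h1 h2).
    destruct (c_ab _ _ _ _ _ C i) as [ha [hab hb]].
    destruct (tn_props _ (proj1 (proj2 C) i)) as [_ [_ [_ [_ [Hle _]]]]].
    assert (Hs := sc_in01 _ _ s hab h1). assert (Ht := sc_in01 _ _ t hab h2).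
    destruct (Hle _ _ Hs Ht) as [l1 l2].
    assert (A1 : (b i - a i) * f i (sc (a i) (b i) s) (sc (a i) (b i) t) <= (b i - a i) * sc (a i) (b i) s)
      by (apply Rmult_le_compat_l; lra).
    assert (A2 : (b i - a i) * f i (sc (a i) (b i) s) (sc (a i) (b i) t) <= (b i - a i) * sc (a i) (b i) t)
      by (apply Rmult_le_compat_l; lra).
    rewrite sc_mul in A1, A2 by lra. lra.
  - rewrite (c_out _ _ _ _ _ C) by (intros i hi; apply Hno; exists i; exact hi).
    unfold Rmin; destruct (Rle_dec s t); lra.
Qed.

Lemma c_edge I a b f g : ctx I a b f g -> forall i s t, a i <= t <= b i -> 0 <= s <= 1 ->
  (s <= a i -> g s t = s) /\ (b i <= s -> g s t = t).
Proof.
  intros C i s t ht hs. destruct (c_ab _ _ _ _ _ C i) as [ha [hab hb]].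
  split; intro hsa; rewrite (c_min _ _ _ _ _ C s t hs ltac:(lra)).
  - unfold Rmin; destruct (Rle_dec s t); lra.
  - intros j [[h1 h2] [h3 h4]]. destruct (classic (i = j)) as [<-|nij]; [lra|].
    apply (c_overlap _ _ _ _ _ C i j nij); lra.
  - unfold Rmin; destruct (Rle_dec s t); lra.
  - intros j [[h1 h2] [h3 h4]]. destruct (classic (i = j)) as [<-|nij]; [lra|].
    apply (c_overlap _ _ _ _ _ C i j nij); lra.
Qed.

Lemma luk f : is_tnorm f -> propA f -> forall y z, in01 y -> in01 z -> y <= z -> y + z - 1 <= f y z.
Proof.
  intros HT HA y z hy hz hyz. destruct (tn_props f HT) as [Hpos [_ [_ [H1r _]]]].
  destruct (Rle_dec (y + z - 1) 0).
  - pose proof (Hpos y z hy hz); lra.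
  - assert (in01 (y+z-1)) by (unfold in01 in *; lra).
    rewrite <- (H1r (y+z-1)) by auto.
    apply HA; unfold in01 in *; lra.
Qed.

Lemma partA I a b f g : ctx I a b f g -> (forall i, propA (f i)) -> propA g.
Proof.
  intros C HA x y z w h0 hxy hyz hzw hw1 hsum.
  destruct (classic (exists i, a i <= y <= b i /\ a i <= z <= b i)) as [[i [hy hz]] | Hno].
  - destruct (c_ab _ _ _ _ _ C i) as [ha [hab hb]].
    destruct (tn_props _ (proj1 (proj2 C) i)) as [Hpos _].
    pose proof (sc_in01 _ _ y hab hy) as Iy. pose proof (sc_in01 _ _ z hab hz) as Iz.
    destruct (classic (a i <= x /\ w <= b i)) as [[hx hw] | Hn].
    + rewrite (c_in _ _ _ _ _ C i x w ltac:(lra) ltac:(lra)).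
      rewrite (c_in _ _ _ _ _ C i y z hy hz).
      apply Rplus_le_compat_l. apply Rmult_le_compat_l; [lra|].
      pose proof (sc_in01 _ _ x hab ltac:(lra)) as Ix.
      pose proof (sc_in01 _ _ w hab ltac:(lra)) as Iw.
      apply HA.
      * destruct Ix; lra.
      * apply sc_mono; lra.
      * apply sc_mono; lra.
      * apply sc_mono; lra.
      * destruct Iw; lra.
      * replace (sc (a i) (b i) w + sc (a i) (b i) x) with (sc (a i) (b i) (w + x - a i))
          by (unfold sc; field; lra).
        replace (sc (a i) (b i) y + sc (a i) (b i) z) with (sc (a i) (b i) (y + z - a i))
          by (unfold sc; field; lra).
        apply sc_mono; lra.
    + pose proof (c_le_min _ _ _ _ _ C x w ltac:(lra) ltac:(lra)) as [Hx _].
      rewrite (c_in _ _ _ _ _ C i y z hy hz).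
      pose proof (Hpos _ _ Iy Iz).
      pose proof (luk _ (proj1 (proj2 C) i) (HA i) _ _ Iy Iz (sc_mono _ _ _ _ hab hyz)) as HL.
      assert (HL1 : 0 <= (b i - a i) * f i (sc (a i) (b i) y) (sc (a i) (b i) z))
        by (apply Rmult_le_pos; lra).
      assert (HL2 : (b i - a i) * (sc (a i) (b i) y + sc (a i) (b i) z - 1)
                    <= (b i - a i) * f i (sc (a i) (b i) y) (sc (a i) (b i) z))
        by (apply Rmult_le_compat_l; lra).
      replace ((b i - a i) * (sc (a i) (b i) y + sc (a i) (b i) z - 1)) with (y + z - a i - b i)
        in HL2 by (unfold sc; field; lra).
      destruct (Rlt_or_le x (a i)); [lra|].
      assert (b i < w) by (destruct (Rle_dec w (b i)); [exfalso; apply Hn; split; lra | lra]).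
      lra.
  - rewrite (c_out _ _ _ _ _ C y z) by (intros i hi; apply Hno; exists i; exact hi).
    pose proof (c_le_min _ _ _ _ _ C x w ltac:(lra) ltac:(lra)) as [Hx _].
    unfold Rmin; destruct (Rle_dec y z); lra.
Qed.

Lemma c_LM I a b f g : ctx I a b f g -> (forall i, propB (f i)) ->
  forall t s1 s2, 0 <= t <= 1 -> 0 <= s1 -> s1 <= s2 -> s2 <= 1 ->
  0 <= g s2 t - g s1 t <= s2 - s1.
Proof.
  intros C HB t s1 s2 ht h1 h12 h2.
  destruct (classic (exists i, a i <= t <= b i)) as [[i hi] | Hno].
  - destruct (c_ab _ _ _ _ _ C i) as [ha [hab hb]].
    destruct (tn_props _ (proj1 (proj2 C) i)) as [Hpos [_ [_ [H1r [_ [Hm1 _]]]]]].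
    assert (Hin : forall u v, a i <= u -> u <= v -> v <= b i -> 0 <= g v t - g u t <= v - u).
    { intros u v hu huv hv.
      rewrite (c_in _ _ _ _ _ C i v t ltac:(lra) hi), (c_in _ _ _ _ _ C i u t ltac:(lra) hi).
      assert (Iu : in01 (sc (a i) (b i) u)) by (apply sc_in01; lra).
      assert (Iv : in01 (sc (a i) (b i) v)) by (apply sc_in01; lra).
      assert (It : in01 (sc (a i) (b i) t)) by (apply sc_in01; lra).
      assert (huv' : sc (a i) (b i) u <= sc (a i) (b i) v) by (apply sc_mono; lra).
      assert (HBi : f i (sc (a i) (b i) u) 1 - f i (sc (a i) (b i) u) (sc (a i) (b i) t)
                 <= f i (sc (a i) (b i) v) 1 - f i (sc (a i) (b i) v) (sc (a i) (b i) t))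
        by (apply HB; unfold in01 in *; lra).
      rewrite !H1r in HBi by auto.
      assert (Hmo : f i (sc (a i) (b i) u) (sc (a i) (b i) t) <= f i (sc (a i) (b i) v) (sc (a i) (b i) t))
        by (apply Hm1; auto).
      assert (M1 : (b i - a i) * f i (sc (a i) (b i) u) (sc (a i) (b i) t)
                <= (b i - a i) * f i (sc (a i) (b i) v) (sc (a i) (b i) t))
        by (apply Rmult_le_compat_l; lra).
      assert (M2 : (b i - a i) * (f i (sc (a i) (b i) v) (sc (a i) (b i) t) - f i (sc (a i) (b i) u) (sc (a i) (b i) t))
                <= (b i - a i) * (sc (a i) (b i) v - sc (a i) (b i) u))
        by (apply Rmult_le_compat_l; lra).
      replace ((b i - a i) * (sc (a i) (b i) v - sc (a i) (b i) u)) with (v - u) in M2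
        by (unfold sc; field; lra).
      split; lra. }
    assert (E1 : forall s, 0 <= s <= 1 -> s <= a i -> g s t = s)
      by (intros s hs hsa; exact (proj1 (c_edge _ _ _ _ _ C i s t hi hs) hsa)).
    assert (E3 : forall s, 0 <= s <= 1 -> b i <= s -> g s t = t)
      by (intros s hs hsa; exact (proj2 (c_edge _ _ _ _ _ C i s t hi hs) hsa)).
    destruct (Rle_dec s2 (a i)).
    + rewrite (E1 s1), (E1 s2) by lra. lra.
    + destruct (Rle_dec (b i) s1).
      * rewrite (E3 s1), (E3 s2) by lra. lra.
      * destruct (Rle_dec s1 (a i)), (Rle_dec s2 (b i)).
        -- pose proof (Hin (a i) s2 ltac:(lra) ltac:(lra) ltac:(lra)) as K.
           rewrite (E1 (a i)) in K by lra. rewrite (E1 s1) by lra. lra.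
        -- rewrite (E1 s1), (E3 s2) by lra. lra.
        -- apply Hin; lra.
        -- pose proof (Hin s1 (b i) ltac:(lra) ltac:(lra) ltac:(lra)) as K.
           rewrite (E3 (b i)) in K by lra. rewrite (E3 s2) by lra. lra.
  - assert (E : forall s, g s t = Rmin s t).
    { intro s. apply (c_out _ _ _ _ _ C). intros i [_ h]; apply Hno; exists i; exact h. }
    rewrite !E. unfold Rmin; destruct (Rle_dec s1 t), (Rle_dec s2 t); lra.
Qed.

Lemma partB I a b f g : ctx I a b f g -> (forall i, propB (f i)) -> propB g.
Proof.
  intros C HB x y z w hx hxy hy hz hzw hw.
  destruct (classic (exists i, a i <= z <= b i /\ a i <= w <= b i)) as [[i [hzi hwi]] | Hno].
  - destruct (c_ab _ _ _ _ _ C i) as [ha [hab hb]].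
    destruct (tn_props _ (proj1 (proj2 C) i)) as [Hpos [_ [H1l [H1r [_ [Hm1 Hm2]]]]]].
    assert (E1 : forall s t, 0 <= s <= 1 -> a i <= t <= b i -> s <= a i -> g s t = s)
      by (intros s t hs ht hsa; exact (proj1 (c_edge _ _ _ _ _ C i s t ht hs) hsa)).
    assert (E3 : forall s t, 0 <= s <= 1 -> a i <= t <= b i -> b i <= s -> g s t = t)
      by (intros s t hs ht hsa; exact (proj2 (c_edge _ _ _ _ _ C i s t ht hs) hsa)).
    assert (Iz : in01 (sc (a i) (b i) z)) by (apply sc_in01; lra).
    assert (Iw : in01 (sc (a i) (b i) w)) by (apply sc_in01; lra).
    assert (hzw' : sc (a i) (b i) z <= sc (a i) (b i) w) by (apply sc_mono; lra).
    assert (Hfor : forall s, a i <= s <= b i -> g s w - g s z =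
       (b i - a i) * (f i (sc (a i) (b i) s) (sc (a i) (b i) w) - f i (sc (a i) (b i) s) (sc (a i) (b i) z))).
    { intros s hs. rewrite (c_in _ _ _ _ _ C i s w hs hwi), (c_in _ _ _ _ _ C i s z hs hzi). ring. }
    assert (Dbd : forall s, a i <= s <= b i -> 0 <= g s w - g s z <= w - z).
    { intros s hs. rewrite (Hfor s hs).
      assert (Is : in01 (sc (a i) (b i) s)) by (apply sc_in01; lra).
      assert (K1 : f i (sc (a i) (b i) s) (sc (a i) (b i) z) <= f i (sc (a i) (b i) s) (sc (a i) (b i) w))
        by (apply Hm2; auto).
      assert (K2 : f i (sc (a i) (b i) s) (sc (a i) (b i) w) - f i (sc (a i) (b i) s) (sc (a i) (b i) z)
                <= f i 1 (sc (a i) (b i) w) - f i 1 (sc (a i) (b i) z))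
        by (apply HB; unfold in01 in *; lra).
      rewrite !H1l in K2 by auto.
      split.
      - apply Rmult_le_pos; lra.
      - assert (K3 : (b i - a i) * (f i (sc (a i) (b i) s) (sc (a i) (b i) w) - f i (sc (a i) (b i) s) (sc (a i) (b i) z))
                 <= (b i - a i) * (sc (a i) (b i) w - sc (a i) (b i) z))
          by (apply Rmult_le_compat_l; lra).
        replace ((b i - a i) * (sc (a i) (b i) w - sc (a i) (b i) z)) with (w - z) in K3
          by (unfold sc; field; lra).
        exact K3. }
    assert (Dmono : forall s1 s2, a i <= s1 -> s1 <= s2 -> s2 <= b i ->
               g s1 w - g s1 z <= g s2 w - g s2 z).
    { intros s1 s2 h1 h12 h2. rewrite (Hfor s1 ltac:(lra)), (Hfor s2 ltac:(lra)).
      apply Rmult_le_compat_l; [lra|]. apply HB.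
      - destruct (sc_in01 _ _ s1 hab ltac:(lra)); lra.
      - apply sc_mono; lra.
      - destruct (sc_in01 _ _ s2 hab ltac:(lra)); lra.
      - destruct Iz; lra.
      - exact hzw'.
      - destruct Iw; lra. }
    destruct (Rle_dec x (a i)).
    + rewrite (E1 x w), (E1 x z) by lra.
      destruct (Rle_dec y (a i)).
      * rewrite (E1 y w), (E1 y z) by lra. lra.
      * destruct (Rle_dec (b i) y).
        -- rewrite (E3 y w), (E3 y z) by lra. lra.
        -- pose proof (Dbd y ltac:(lra)). lra.
    + destruct (Rle_dec (b i) x).
      * rewrite (E3 x w), (E3 x z), (E3 y w), (E3 y z) by lra. lra.
      * destruct (Rle_dec (b i) y).
        -- rewrite (E3 y w), (E3 y z) by lra. pose proof (Dbd x ltac:(lra)). lra.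
        -- apply Dmono; lra.
  - assert (Hm : exists m, 0 <= m <= 1 /\ (forall s, 0 <= s <= 1 -> s <= m -> g s w = s) /\
                 (forall s, 0 <= s <= 1 -> m <= s -> g s z = z)).
    { destruct (classic (exists i, a i <= z <= b i)) as [[i hi] | Hz].
      - destruct (c_ab _ _ _ _ _ C i) as [ha [hab hb]].
        exists (b i). split; [lra|]. split.
        + intros s hs hsm.
          assert (hwb : b i <= w).
          { destruct (Rle_dec (b i) w) as [r|r]; [exact r|].
            exfalso; apply Hno; exists i; split; [exact hi| lra]. }
          rewrite (c_min _ _ _ _ _ C s w hs ltac:(lra)).
          * unfold Rmin; destruct (Rle_dec s w); lra.
          * intros j [[j1 j2] [j3 j4]]. destruct (classic (i = j)) as [<-|nij]; [lra|].
            apply (c_overlap _ _ _ _ _ C i j nij); lra.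
        + intros s hs hsm. exact (proj2 (c_edge _ _ _ _ _ C i s z hi hs) hsm).
      - exists z. split; [lra|]. split.
        + intros s hs hsm. rewrite (c_min _ _ _ _ _ C s w hs ltac:(lra)).
          * unfold Rmin; destruct (Rle_dec s w); lra.
          * intros j [[j1 j2] [j3 j4]]. apply Hz; exists j; lra.
        + intros s hs hsm. rewrite (c_out _ _ _ _ _ C s z).
          * unfold Rmin; destruct (Rle_dec s z); lra.
          * intros j [_ hj]; apply Hz; exists j; exact hj. }
    destruct Hm as [m [hm [Pw Pz]]].
    destruct (Rle_dec y m).
    + assert (g x w = x) by (apply Pw; lra). assert (g y w = y) by (apply Pw; lra).
      pose proof (c_LM _ _ _ _ _ C HB z x y ltac:(lra) hx hxy hy). lra.
    + destruct (Rle_dec m x).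
      * assert (g x z = z) by (apply Pz; lra). assert (g y z = z) by (apply Pz; lra).
        pose proof (c_LM _ _ _ _ _ C HB w x y ltac:(lra) hx hxy hy). lra.
      * assert (g x w = x) by (apply Pw; lra). assert (g y z = z) by (apply Pz; lra).
        assert (g m w = m) by (apply Pw; lra). assert (g m z = z) by (apply Pz; lra).
        pose proof (c_LM _ _ _ _ _ C HB z x m ltac:(lra) hx ltac:(lra) ltac:(lra)).
        pose proof (c_LM _ _ _ _ _ C HB w m y ltac:(lra) ltac:(lra) ltac:(lra) hy). lra.
Qed.

Theorem lemma1 (I : Type) (a b : I -> R) (f : I -> R -> R -> R)
  (g : R -> R -> R) :
  interval_family I a b ->
  (forall i, is_tnorm (f i)) ->
  is_ordinal_sum I f a b g ->
  ((forall i, propA (f i)) -> propA g) /\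
  ((forall i, propB (f i)) -> propB g).
Proof.
  intros HF HT HO. assert (C : ctx I a b f g) by (split; [|split]; auto).
  split; [apply (partA I a b f g C) | apply (partB I a b f g C)].
Qed.
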